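(* Let $m,k\in\mathbb{N}$ and let $\beta\in\mathbb{C}$ with $\beta\notin\mathbb{Z}_0^-$ and $\frac{\beta}{2}-m\notin\mathbb{Z}_0^-$. Then \[ {}_3F_2\left[\begin{array}{r} -2m-1,\ \beta,\ -m-k-\tfrac{1}{2};\\ -2m-2k-1,\ \tfrac{\beta}{2}-m;\end{array}1\right]_{2m+1}=0. \]
   Context: $\mathbb{N}=\{1,2,3,\dots\}$, $\mathbb{Z}_0^-=\{0,-1,-2,\dots\}$. For $a\in\mathbb{C}$ and $n\in\mathbb{N}_0$, $(a)_0=1$ and $(a)_n=a(a+1)\cdots(a+n-1)$. For $N\in\mathbb{N}_0$, ${}_3F_2\left[\begin{array}{r} a_1,a_2,a_3;\\ b_1,b_2;\end{array}z\right]_N=\sum_{n=0}^{N}\frac{(a_1)_n(a_2)_n(a_3)_n}{(b_1)_n(b_2)_n}\frac{z^n}{n!}$ (the sum of the first $N+1$ terms), defined whenever $(b_1)_n(b_2)_n\neq0$ for $0\le n\le N$. *)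

(* Defs.v *)
(* complex numbers are R[i] (mathcomp-real-closed) over an
   arbitrary realType R (e.g. Stdlib's R), i.e. the complex field C. *)
From mathcomp Require Import all_boot all_algebra complex.
From mathcomp Require Import reals.
Set Implicit Arguments. Unset Strict Implicit. Unset Printing Implicit Defensive.
Import GRing.Theory Num.Theory.
Local Open Scope ring_scope.

Definition poch {F : pzRingType} (a : F) (n : nat) : F :=
  \prod_(i < n) (a + i%:R).

Definition F32_trunc {F : fieldType} (a1 a2 a3 b1 b2 z : F) (N : nat) : F :=
  \sum_(n < N.+1)
    (poch a1 n * poch a2 n * poch a3 n) / (poch b1 n * poch b2 n)
      * z ^+ n / (n`!)%:R.

Definition in_Z0minus {F : pzRingType} (x : F) : Prop :=
  exists n : nat, x = - n%:R.

(* Main.v *)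
Require Import Defs.
From mathcomp Require Import all_boot all_algebra complex.
From mathcomp Require Import reals.
From mathcomp Require Import ring zify.
Import GRing.Theory Num.Theory.
Local Open Scope ring_scope.

Section Aux.
Variable F : numFieldType.

Lemma poch_add (a : F) n p : poch a (n + p) = poch a n * poch (a + n%:R) p.
Proof.
rewrite /poch big_split_ord /=; congr (_ * _); apply: eq_bigr => i _.
by rewrite natrD addrA.
Qed.

Lemma poch_S (a : F) n : poch a n.+1 = poch a n * (a + n%:R).
Proof. by rewrite /poch big_ord_recr. Qed.

Lemma poch_zero (a : F) n t : (t < n)%N -> a + t%:R = 0 -> poch a n = 0.
Proof.
move=> lt H; rewrite /poch (bigD1 (Ordinal lt)) //=.
by rewrite H mul0r.
Qed.

Lemma poch_neq0 (a : F) n : (forall t, (t < n)%N -> a + t%:R != 0) -> poch a n != 0.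
Proof.
move=> H; apply/prodf_neq0 => i _; exact: H.
Qed.

Lemma pochN (N n : nat) : poch (- (N%:R) : F) n = (-1) ^+ n * ('C(N, n) * n`!)%:R.
Proof.
rewrite bin_ffact; elim: n => [|n IH]; first by rewrite /poch big_ord0 expr0 mul1r.
rewrite poch_S IH ffactnSr natrM exprS.
have [le|lt] := leqP n N.
  rewrite natrB //; ring.
by rewrite ffact_small // !(mul0r, mulr0).
Qed.


Lemma size_diff_shift (p : {poly F}) N : (size p <= N.+1)%N ->
  (size ((p - (p \Po ('X + 1%:P)))%R) <= N)%N.
Proof.
move=> sp; set q := p \Po ('X + 1%:P).
have sq : size q = size p by rewrite size_comp_poly2 // size_XaddC.
have lq : lead_coef q = lead_coef p.
  by rewrite lead_coef_comp ?size_XaddC // lead_coefXaddC expr1n mulr1.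
apply/leq_sizeP => j Nj; rewrite coefB.
have [lt|ge] := ltnP j (size p).
  have -> : j = (size p).-1 by lia.
  have -> : q`_(size p).-1 = lead_coef q by rewrite /lead_coef sq.
  by rewrite lq subrr.
by rewrite !nth_default ?subrr // sq.
Qed.

Lemma FD N (p : {poly F}) : (size p <= N)%N ->
  \sum_(n < N.+1) ((-1) ^+ n * 'C(N, n)%:R) * p.[n%:R] = 0.
Proof.
elim: N p => [|N IH] p sp.
  move: sp; rewrite size_poly_leq0 => /eqP->.
  by rewrite big1 // => i _; rewrite horner0 mulr0.
set a := fun n : nat => (-1) ^+ n * 'C(N, n)%:R * p.[n%:R].
have E1 : \sum_(n < N.+2) a n = \sum_(n < N.+1) a n.
  by rewrite big_ord_recr /= /a bin_small // mulr0 mul0r addr0.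
have E2 : \sum_(n < N.+2) a n = a 0%N + \sum_(i < N.+1) a i.+1.
  by rewrite big_ord_recl.
rewrite big_ord_recl /=.
rewrite (eq_bigr (fun i : 'I_N.+1 => a i.+1 -
   (-1) ^+ i * 'C(N, i)%:R * (p \Po ('X + 1%:P)).[i%:R])); last first.
  move=> i _; rewrite /bump leq0n add1n /a binS natrD horner_comp !hornerE natr1.
  rewrite exprS; ring.
rewrite /a sumrB addrA.
have -> : (-1) ^+ 0 * 'C(N.+1, 0)%:R * p.[0] +
  \sum_(i < N.+1) (-1) ^+ i.+1 * 'C(N, i.+1)%:R * p.[i.+1%:R] = \sum_(n < N.+1) a n.
  by rewrite -E1 E2 /a !bin0.
rewrite /a -sumrB.
rewrite -[RHS](IH (p - (p \Po ('X + 1%:P)))); last exact: size_diff_shift.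
by apply: eq_bigr => i _; rewrite hornerD hornerN; ring.
Qed.

Lemma I1 (a : F) N n d : (n <= N)%N -> (2 * d <= N.+1)%N ->
  poch a n * poch (a - d%:R + n%:R) (N - n) = poch a (N - d) * poch (a - d%:R + n%:R) d.
Proof.
move=> nN dN; have [dn|nd] := leqP d n.
  have -> : a - d%:R + n%:R = a + (n - d)%:R by rewrite natrB //; ring.
  have -> : (N - d = (n - d) + (N - n))%N by lia.
  have -> : poch a n = poch a (n - d + d)%N by rewrite subnK.
  by rewrite !poch_add; ring.
have -> : (N - n = d + (N - n - d))%N by lia.
have -> : (N - d = n + (N - n - d))%N by lia.
rewrite !poch_add.
have -> : a - d%:R + n%:R + d%:R = a + n%:R by ring.
ring.
Qed.

Lemma I2 (a : F) n p : poch a n * poch (a + n%:R) p = poch a p * poch (a + p%:R) n.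
Proof. by rewrite -!poch_add addnC. Qed.

Lemma size_prod2 n (G : nat -> {poly F}) : (forall i, (size (G i) <= 2)%N) ->
  (size (\prod_(i < n) G i)%R <= n.+1)%N.
Proof.
move=> H; elim: n => [|n IH]; first by rewrite big_ord0 size_poly1.
rewrite big_ord_recr /=; apply: leq_trans (size_polyMleq _ _) _.
have h := leq_add IH (H n); rewrite -subn1 leq_subLR; apply: leq_trans h _; by rewrite addn2 add1n.
Qed.

Lemma size_sum_le K B (G : 'I_K -> {poly F}) : (forall i, (size (G i) <= B)%N) ->
  (size (\sum_(i < K) G i)%R <= B)%N.
Proof.
move=> H; elim/big_ind: _ => //; first by rewrite size_poly0.
by move=> p r hp hr; apply: leq_trans (size_polyD _ _) _; rewrite geq_max hp hr.
Qed.

Lemma alg (sg C f U V W A B Y p2n p2i : F) : p2n != 0 -> p2i != 0 -> f != 0 ->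
  U * V = A * B -> p2n * Y = p2i * W ->
  sg * (C * f) * U / (p2n * f) * (W * V) = A / p2i * (sg * C * (B * Y)).
Proof.
move=> h1 h2 h3 e1 e2.
have -> : Y = p2i * W / p2n by rewrite -e2; field.
have -> : sg * (C * f) * U / (p2n * f) * (W * V) = sg * C * (U * V) * W / p2n by field; rewrite ?h1 ?h2 ?h3.
by rewrite e1; field; rewrite ?h1 ?h2 ?h3.
Qed.

End Aux.

Section Main.
Variable F : numFieldType.
Variables (m : nat) (c : F).

Definition Aco n : F :=
  poch (- (((2 * m).+1)%N%:R)) n * poch c n / (poch (2 * c) n * (n`!)%:R).

Definition Pb : {poly F} :=
  \sum_(n < (2 * m).+2) Aco n *: (\prod_(i < n) ('X + (i%:R)%:P) *
     \prod_(j < ((2 * m).+1 - n)%N) (2^-1 *: 'X + (j%:R + n%:R - m%:R)%:P)).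

Lemma Pb_eval x : Pb.[x] = \sum_(n < (2 * m).+2)
   Aco n * (poch x n * poch (x / 2 - m%:R + n%:R) ((2 * m).+1 - n)).
Proof.
rewrite /Pb horner_sum; apply: eq_bigr => n _.
rewrite hornerZ hornerM !horner_prod; congr (_ * (_ * _)).
  by apply: eq_bigr => i _; rewrite !hornerE.
apply: eq_bigr => j _; rewrite !hornerE /=; ring.
Qed.

Lemma Pb_size : (size Pb <= (2 * m).+2)%N.
Proof.
apply: size_sum_le => n; apply: leq_trans (size_scale_leq _ _) _.
apply: leq_trans (size_polyMleq _ _) _.
have h1 : (size (\prod_(i < n) ('X + (i%:R)%:P : {poly F}))%R <= n.+1)%N.
  by apply: (@size_prod2 F n (fun i : nat => 'X + (i%:R)%:P)) => i; rewrite size_XaddC.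
have h2 : (size (\prod_(j < ((2 * m).+1 - n)%N)
   (2^-1 *: 'X + (j%:R + n%:R - m%:R)%:P : {poly F}))%R <= ((2 * m).+1 - n).+1)%N.
  apply: (@size_prod2 F _ (fun j : nat => 2^-1 *: 'X + (j%:R + n%:R - m%:R)%:P)) => j.
  apply: leq_trans (size_polyD _ _) _.
  rewrite geq_max; apply/andP; split.
    by apply: leq_trans (size_scale_leq _ _) _; rewrite size_polyX.
  by rewrite size_polyC; case: (_ != 0).
have h := leq_add h1 h2; rewrite -subn1 leq_subLR; apply: leq_trans h _.
have := ltn_ord n; lia.
Qed.


Lemma Pb_root_even j : (j <= m)%N -> Pb.[- ((2 * j)%N%:R)] = 0.
Proof.
move=> jm; rewrite Pb_eval; apply: big1 => n _.
have nN := ltn_ord n.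
have [hn|hn] := leqP n (j + m).
  rewrite (@poch_zero _ (- ((2 * j)%N%:R) / 2 - m%:R + n%:R) _ (j + m - n)%N); first by rewrite !mulr0.
    lia.
  by rewrite natrB // natrD natrM; field.
rewrite (@poch_zero _ _ n (2 * j)%N).
- by rewrite mul0r mulr0.
- lia.
- by rewrite addNr.
Qed.

Lemma Pb_root_odd i (q : nat) : (m < q)%N -> 2 * c = - (((2 * q).+1)%N%:R) ->
  (i <= m)%N -> Pb.[2 * c + (2 * i)%N%:R] = 0.
Proof.
move=> mq hc im.
have h2c t : t != (2 * q).+1 -> 2 * c + t%:R != 0.
  by move=> ht; rewrite hc addrC subr_eq0 eqr_nat.
have hP2 n : (n <= (2 * q).+1)%N -> poch (2 * c) n != 0.
  by move=> hn; apply: poch_neq0 => t ht; apply: h2c; lia.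
pose d := (m - i)%N.
pose K := poch c ((2 * m).+1 - d) / poch (2 * c) (2 * i).
pose Q : {poly F} := \prod_(t < d) ('X + (c - d%:R + t%:R)%:P) *
                     \prod_(t < 2 * i) ('X + (2 * c + t%:R)%:P).
have sQ : (size Q <= (2 * m).+1)%N.
  apply: leq_trans (size_polyMleq _ _) _.
  have h1 := @size_prod2 F d (fun t : nat => 'X + (c - d%:R + t%:R)%:P)
     (fun t => eq_leq (size_XaddC _)).
  have h2 := @size_prod2 F (2 * i) (fun t : nat => 'X + (2 * c + t%:R)%:P)
     (fun t => eq_leq (size_XaddC _)).
  have h := leq_add h1 h2; rewrite -subn1 leq_subLR; apply: leq_trans h _.
  rewrite /d; lia.
rewrite Pb_eval.
transitivity (K * \sum_(n < (2 * m).+2)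
    ((-1) ^+ n * 'C((2 * m).+1, n)%:R) * Q.[n%:R]); last by rewrite FD // mulr0.
rewrite mulr_sumr; apply: eq_bigr => n _.
have nN := ltn_ord n.
have hQ : Q.[n%:R] = poch (c - d%:R + n%:R) d * poch (2 * c + n%:R) (2 * i).
  rewrite hornerM !horner_prod; congr (_ * _); apply: eq_bigr => t _;
  rewrite !hornerE /=; ring.
rewrite hQ /Aco pochN natrM.
have ex : (2 * c + (2 * i)%N%:R) / 2 - m%:R + n%:R = c - d%:R + n%:R.
  by rewrite /d natrB // natrM; field.
rewrite ex /K.
apply: alg.
- apply: hP2; lia.
- apply: hP2; lia.
- by rewrite pnatr_eq0 -lt0n fact_gt0.
- apply: I1; rewrite /d; lia.
- exact: I2.
Qed.

Lemma Pb_eq0 (q : nat) : (m < q)%N -> 2 * c = - (((2 * q).+1)%N%:R) -> Pb = 0.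
Proof.
move=> mq hc.
pose rs := [seq - ((2 * j)%N%:R) | j <- iota 0 m.+1] ++
           [seq 2 * c + (2 * i)%N%:R | i <- iota 0 m.+1] : seq F.
apply/eqP; apply: contraT => nz.
have := @max_poly_roots _ Pb rs nz.
have -> : all (root Pb) rs.
  rewrite all_cat; apply/andP; split; apply/allP => x /mapP [j];
    rewrite mem_iota => /andP [_ hj] ->; apply/eqP.
    by apply: Pb_root_even; lia.
  by apply: (@Pb_root_odd j q mq hc); lia.
have -> : uniq rs.
  rewrite cat_uniq; apply/and3P; split.
  - rewrite map_inj_uniq ?iota_uniq // => a b /eqP.
    by rewrite eqr_opp eqr_nat => /eqP; lia.
  - apply/hasPn => x /mapP [i _ ->]; apply/negP => /mapP [j _ /eqP E].
    have : ((2 * i + 2 * j)%N%:R - ((2 * q).+1)%N%:R : F) =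
           (2 * c + (2 * i)%N%:R) - (- ((2 * j)%N%:R)) by rewrite hc natrD; ring.
    rewrite (eqP E) subrr => /eqP; rewrite subr_eq0 eqr_nat => /eqP; lia.
  - rewrite map_inj_uniq ?iota_uniq // => a b /eqP.
    by rewrite (inj_eq (addrI _)) eqr_nat => /eqP; lia.
have := Pb_size.
have := Pb_size. rewrite /rs size_cat !size_map size_iota => h1 _ /(_ isT isT) h2.
have h3 : (size Pb <= m.+1 + m.+1)%N by apply: leq_trans h1 _; lia.
by rewrite ltnNge h3 in h2.
Qed.

End Main.

Theorem mainTheorem2 (R : realType) (m k : nat) (beta : R[i]) :
  (0 < m)%N -> (0 < k)%N ->
  ~ in_Z0minus beta ->
  ~ in_Z0minus (beta / 2 - m%:R) ->
  F32_trunc (- (2 * m + 1)%:R) beta (- (m + k)%:R - 2^-1)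
            (- (2 * m + 2 * k + 1)%:R) (beta / 2 - m%:R) 1 (2 * m + 1) = 0.
Proof.
move=> m0 k0 hb he.
rewrite /F32_trunc.
set c : R[i] := - (m + k)%:R - 2^-1.
set e : R[i] := beta / 2 - m%:R.
have hc : 2 * c = - (((2 * (m + k)).+1)%N%:R).
  by rewrite /c -[((2 * (m + k)).+1)%N%:R]natr1 natrM natrD; field.
have hb1 : - ((2 * m + 2 * k + 1)%N%:R) = 2 * c :> R[i].
  by rewrite hc; congr (- _%:R); lia.
rewrite hb1 addn1.
have mq : (m < m + k)%N by lia.
have P0 := @Pb_eq0 _ m c (m + k)%N mq hc.
have hpe : poch e (2 * m).+1 != 0.
  apply: poch_neq0 => t _; apply/eqP => E; apply: he; exists t.
  by apply/eqP; rewrite -subr_eq0 opprK; apply/eqP; exact: E.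
have hP2 n : (n <= (2 * m).+1)%N -> poch (2 * c) n != 0.
  by move=> hn; apply: poch_neq0 => t ht; rewrite hc addrC subr_eq0 eqr_nat; lia.
have E : (\sum_(n < (2 * m).+2) poch (- ((2 * m).+1)%:R) n * poch beta n * poch c n /
    (poch (2 * c) n * poch e n) * 1 ^+ n / (n`!)%:R) * poch e (2 * m).+1 = (@Pb _ m c).[beta].
  rewrite Pb_eval mulr_suml; apply: eq_bigr => n _.
  have nN := ltn_ord n.
  have hsplit : poch e (2 * m).+1 = poch e n * poch (e + n%:R) ((2 * m).+1 - n).
    by rewrite -poch_add subnKC // -ltnS.
  have hpn : poch e n != 0.
    by move: hpe; rewrite hsplit mulf_eq0 negb_or => /andP[].
  have h2n : poch (2 * c) n != 0 by apply: hP2; rewrite -ltnS.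
  have hf : (n`!)%:R != 0 :> R[i] by rewrite pnatr_eq0 -lt0n fact_gt0.
  rewrite hsplit /Aco expr1n mulr1 /e.
  by field; rewrite ?hpn ?h2n ?hf.
move: E; rewrite P0 horner0 => /eqP; rewrite mulf_eq0 (negbTE hpe) orbF => /eqP.
done.
Qed.
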